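(* Let $\pi$ be a propositional formula and $\varphi$ a formula of the basic modal language (built from $\top$, atoms, $\lnot$, $\land$, $\Box$). Then the formula $(\Box\pi\land\varphi)\to[\dagger\pi][!\pi]\varphi$ is true at every world of every transitive model.
   Context: Fix a countable non-empty set $\mathit{At}$ of atoms. A model is $\mathcal{M}=\langle W,R,V\rangle$, $W\neq\varnothing$, $R\subseteq W\times W$, $V:\mathit{At}\to\mathcal{P}(W)$, with standard Kripke semantics ($\mathcal{M},w\models\Box\psi$ iff $\psi$ holds at all $R$-successors of $w$); it is transitive if $R$ is transitive. A literal is an atom or its negation; a clause is a finite set $D$ of literals read as $\bigvee D$ ($\bigvee\varnothing:=\bot$), tautological if it contains $p$ and $\lnot p$ for some $p$. For propositional $\pi$, $\mathcal{C}(\pi)$ is the set of non-tautological clauses $D$ with $\models\pi\to\bigvee D$ and no $D'\subsetneq D$ with $\models\pi\to\bigvee D'$. For a model $\mathcal{M}$ and a non-tautological clause $D$, $\mathcal{M}^{(D)}_u=\langle W',R',V'\rangle$ has $W'=W\times\{0,1\}$, $(w,i)R'(v,j)$ iff $wRv$, $(w,0)\in V'(p)$ iff $w\in V(p)$, and $(w,1)\in V'(p)$ iff $\lnot p\in D$, or $\{p,\lnot p\}\cap D=\varnothing$ and $w\in V(p)$. Forgetting: $\mathcal{M},w\models[\dagger\pi]\psi$ iff for all $D\in\mathcal{C}(\pi)$, $\mathcal{M}^{(D)}_u,(w,0)\models\psi$. Public announcement: $\mathcal{M},w\models[!\pi]\psi$ iff ($\mathcal{M},w\models\pi$ implies $\mathcal{M}|_\pi,w\models\psi$),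 where $\mathcal{M}|_\pi$ is the restriction of $\mathcal{M}$ (domain, relation and valuation) to the set of worlds of $\mathcal{M}$ satisfying $\pi$. *)

(* Defs.v *)
From mathcomp Require Import all_boot.
From mathcomp Require Import finmap.
Set Implicit Arguments.
Unset Strict Implicit.
Unset Printing Implicit Defensive.
Local Open Scope fset_scope.

Section Logic.
Variable At : countType.

Inductive pform : Type :=
| PTop : pform
| PAtom : At -> pform
| PNot : pform -> pform
| PAnd : pform -> pform -> pform.

(* The full language: basic modal connectives plus forgetting [dagger pi]
   (pi propositional) and public announcement [!chi]. *)
Inductive form : Type :=
| FTop : form
| FAtom : At -> form
| FNot : form -> form
| FAnd : form -> form -> form
| FBox : form -> form
| FForget : pform -> form -> form
| FAnn : form -> form -> form.

Fixpoint embed (p : pform) : form :=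
  match p with
  | PTop => FTop
  | PAtom a => FAtom a
  | PNot q => FNot (embed q)
  | PAnd q r => FAnd (embed q) (embed r)
  end.

Definition FImp (f g : form) : form := FNot (FAnd f (FNot g)).

Fixpoint basic (f : form) : Prop :=
  match f with
  | FTop | FAtom _ => True
  | FNot g | FBox g => basic g
  | FAnd g h => basic g /\ basic h
  | FForget _ _ | FAnn _ _ => False
  end.

(* Literals: (true, p) is the atom p, (false, p) is its negation. *)
Definition lit := (bool * At)%type.
Definition clause := {fset lit}.

Fixpoint peval (v : At -> bool) (p : pform) : bool :=
  match p with
  | PTop => true
  | PAtom a => v a
  | PNot q => ~~ peval v q
  | PAnd q r => peval v q && peval v r
  end.

Definition lit_true (v : At -> bool) (l : lit) : bool :=
  if l.1 then v l.2 else ~~ v l.2.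

Definition entails_clause (p : pform) (D : clause) : Prop :=
  forall v : At -> bool, peval v p -> exists2 l, l \in D & lit_true v l.

Definition tautological (D : clause) : Prop :=
  exists a : At, (true, a) \in D /\ (false, a) \in D.

Definition inC (p : pform) (D : clause) : Prop :=
  ~ tautological D /\ entails_clause p D /\
  ~ (exists D' : clause, D' `<` D /\ entails_clause p D').

Record model : Type := Model {
  world : Type;
  rel : world -> world -> Prop;
  val : At -> world -> Prop }.

Definition transitive_model (M : model) : Prop :=
  forall x y z : world M, rel x y -> rel y z -> rel x z.

Definition upd (M : model) (D : clause) : model :=
  @Model (world M * bool)%type
    (fun x y => rel x.1 y.1)
    (fun a x => if x.2 then
                  (false, a) \in D \/
                  ((true, a) \notin D /\ (false, a) \notin D /\ val a x.1)
                else val a x.1).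

Definition restrict (M : model) (S : world M -> Prop) : model :=
  @Model {w : world M | S w}
    (fun x y => rel (proj1_sig x) (proj1_sig y))
    (fun a x => val a (proj1_sig x)).

Fixpoint sat (f : form) : forall M : model, world M -> Prop :=
  match f with
  | FTop => fun _ _ => True
  | FAtom a => fun M w => val a w
  | FNot g => fun M w => ~ sat g w
  | FAnd g h => fun M w => sat g w /\ sat h w
  | FBox g => fun M w => forall v, rel w v -> sat g v
  | FForget p g => fun M w =>
      forall D : clause, inC p D -> sat g (M := upd M D) (w, false)
  | FAnn g h => fun M w =>
      forall H : sat g w, sat h (M := restrict (fun x => sat g x)) (exist _ w H)
  end.

End Logic.

(* Main.v *)
Require Import Defs.
From mathcomp Require Import all_boot.
From mathcomp Require Import finmap.
From Stdlib Require Import ClassicalEpsilon.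
Local Open Scope fset_scope.

Definition dec (P : Prop) : bool := if excluded_middle_informative P then true else false.

Lemma decP (P : Prop) : dec P = true <-> P.
Proof. rewrite /dec; case: excluded_middle_informative => //. Qed.

Lemma sat_embed (At : countType) (M : model At) (x : world M) (p : pform At) :
  sat (embed p) x <-> peval (fun a => dec (Defs.val a x)) p.
Proof.
elim: p => [|a|q IH|q IHq r IHr] /=.
- by [].
- by split => [h|]; [apply/decP|move/decP].
- rewrite IH; case: (peval _ q); split => //; by move=> H; apply: H.
- rewrite IHq IHr; case: (peval _ q); case: (peval _ r); split => //; by case.
Qed.

Lemma sat_embed_upd (At : countType) (M : model At) (D : clause At) (v : world M)
  (p : pform At) : sat (embed p) (M := upd M D) (v, false) <-> sat (embed p) v.
Proof.
elim: p => [|a|q IH|q IHq r IHr] /=; try tauto.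
Qed.

Lemma not_pi_true (At : countType) (M : model At) (D : clause At) (pi : pform At)
  (u : world M) : inC pi D -> ~ sat (embed pi) (M := upd M D) (u, true).
Proof.
move=> [Hnt [Hent _]] /sat_embed Hp.
have [[b a] Hl Ht] := Hent _ Hp.
rewrite /lit_true /= in Ht.
case: b Hl Ht => Hl Ht.
- move/decP: Ht => /= [Hf|[Ht' _]].
  + by apply: Hnt; exists a.
  + by rewrite Hl in Ht'.
- have Hd : dec (Defs.val (m:=upd M D) a (u, true)) = true by apply/decP; left.
  by rewrite Hd in Ht.
Qed.

Theorem proposition4 (At : countType) (a0 : At) (pi : pform At) (phi : form At)
  (Hphi : basic phi) (M : model At) (w : world M) (HM : transitive_model M) :
  sat (FImp (FAnd (FBox (embed pi)) phi) (FForget pi (FAnn (embed pi) phi))) w.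
Proof.
rewrite /FImp /=.
move=> [[Hbox Hw] Hn]; apply: Hn => D HD H.
suff key : forall f : form At, basic f -> forall (v : world M) (Hv : v = w \/ Defs.rel w v)
  (H : sat (embed pi) (M := upd M D) (v, false)),
  sat f (M := restrict (fun x => sat (embed pi) (M := upd M D) x))
    (exist _ (v, false) H) <-> sat f v.
  by apply/(key phi Hphi w (or_introl erefl)).
elim=> [|a|g IH|g IHg h IHh|g IH|p g _|g _ h _] //= Hb v Hv Hpv.
- by rewrite (IH Hb v Hv Hpv).
- by rewrite (IHg Hb.1 v Hv Hpv) (IHh Hb.2 v Hv Hpv).
- have Hu : forall u, Defs.rel v u -> Defs.rel w u.
    by move=> u Hvu; case: Hv => [Hvw|Hwv]; [rewrite -Hvw | apply: HM Hwv Hvu].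
  split.
  + move=> H1 u Hvu.
    have Hpu : sat (embed pi) (M := upd M D) (u, false).
      by apply/sat_embed_upd; apply: Hbox; apply: Hu.
    apply/(IH Hb u (or_intror (Hu u Hvu)) Hpu).
    by apply: (H1 (exist _ (u, false) Hpu)).
  + move=> H1 [[u b] Hy] /= Hvu.
    case: b Hy => Hy.
    * by exfalso; move: Hy; apply: not_pi_true HD.
    * apply/(IH Hb u (or_intror (Hu u Hvu)) Hy).
      by apply: H1.
Qed.
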